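(* Let $L=(L_1,\dots,L_N)$ be a contraction path (in the sense of the context), let $\{\phi_{P,q}\}$ be a family of nondecreasing maps $\mathbb{R}_{\ge 0}\to\mathbb{R}_{\ge 0}$ and $\oplus$ an operation as in the context, and let $f$ be the associated tree-separable cost function. Then the procedure $\mathrm{ORDER}(L)$ defined in the context returns a pair $(A,B)$ such that: (i) $A$ is a loop order for $L$ with $f(L,A)=\min_{A'} f(L,A')$, the minimum taken over all loop orders $A'$ for $L$; (ii) $B$ minimizes $f(L,B')$ over all loop orders $B'$ for $L$ whose root differs from the root of $A$ (and $B=\bot$, with cost $+\infty$, if no such loop order exists).
   Context: Indices are abstract symbols. A term is a triple $(K_1,K_2,K_3)$ of finite sets of indices (indices of the two operands and of the output of a pairwise contraction); its index set is $U(K_1,K_2,K_3)=K_1\cup K_2\cup K_3$. A contraction path is a finite sequence $L=(L_1,\dots,L_N)$ of terms with nonempty index sets ($N=0$ allowed). For a term $t$ and index $q$, $t\setminus q$ denotes the term obtained by deleting $q$ from each of its three sets. A loop order for $L$ is a tuple $A=(A_1,\dots,A_N)$ where each $A_i$ is a sequence listing every element of $U(L_i)$ exactly once. For $N\ge1$, the root of $A$ is $q=A_1[1]$. Peeling $A$: let $r$ be the largest integer with $A_1[1]=\dots=A_r[1]=q$. Then $L^{(1)}$ is the sequence $(L_1\setminus q,\dots,L_r\setminus q)$ with terms having empty index set deleted, and $A^{(1)}$ is the corresponding loop order for $L^{(1)}$ consisting of the sequences $A_i[2:]$ ($A_i$ with its first element removed) for those $i\le r$ with $|A_i|\ge2$;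 also $L^{(2)}=(L_{r+1},\dots,L_N)$ and $A^{(2)}=(A_{r+1},\dots,A_N)$. Cost function: let $\oplus$ be an associative binary operation on $\mathbb{R}_{\ge0}$ (extended to $+\infty$ in the obvious monotone way) that is nondecreasing in each argument and has $0$ as identity (e.g. $+$ or $\max$). For every contraction path $P$ and index $q$ let $\phi_{P,q}:\mathbb{R}_{\ge0}\to\mathbb{R}_{\ge0}$ be nondecreasing. The tree-separable cost $f$ is defined recursively by $f(L,A)=0$ if $N=0$, and otherwise $f(L,A)=\phi_{(L_1,\dots,L_r),q}\big(f(L^{(1)},A^{(1)})\big)\oplus f(L^{(2)},A^{(2)})$, with $q,r,L^{(i)},A^{(i)}$ from peeling. (Thus $\phi$ is applied at each loop of the fully fused loop-nest forest obtained by fusing common leading indices of consecutive terms, and costs of sibling subtrees are combined by $\oplus$.) Procedure $\mathrm{ORDER}(L)$: if $N=0$, return $(\emptyset,\bot)$ where $\emptyset$ is the empty loop order (cost $0$) and $\bot$ means ''no order'' (cost $+\infty$). Otherwise, for each $q\in U(L_1)$, let $k$ be the largest integer with $q\in U(L_i)$ for all $i\le k$; for each $s=1,\dots,k$: let $X$ be $(L_1\setminus q,\dots,L_s\setminus q)$ with empty-index-set terms deleted, and $Y=(L_{s+1},\dots,L_N)$; compute $(A^X,\cdot)=\mathrm{ORDER}(X)$ and $(\bar A^Y,\bar B^Y)=\mathrm{ORDER}(Y)$; set $A^Y=\bar B^Y$ if $Y$ is nonempty and the root of $\bar A^Y$ is $q$, and $A^Y=\bar A^Y$ otherwise. The candidate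 order $C_{q,s}$ has, for $i\le s$, $i$-th sequence equal to $q$ followed by the sequence for $L_i\setminus q$ in $A^X$ (just $(q)$ if that term was deleted), followed by the sequences of $A^Y$; its value is $\delta_{q,s}=\phi_{(L_1,\dots,L_s),q}\big(f(X,A^X)\big)\oplus f(Y,A^Y)$ (taken as $+\infty$ if $A^Y=\bot$). For each $q$ let $C_q$ be a candidate $C_{q,s}$ of minimal $\delta_{q,s}$. Return $A=C_{q^*}$ for a $q^*$ minimizing this value, and $B=C_{q'}$ for $q'\neq q^*$ minimizing this value among the remaining $q$ (or $\bot$ if $U(L_1)=\{q^*\}$). *)

(* Defs.v *)
From HB Require Import structures.
From mathcomp Require Import all_boot all_order all_algebra.
From mathcomp Require Import finmap.
From mathcomp Require Import reals.

Set Implicit Arguments.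
Unset Strict Implicit.
Unset Printing Implicit Defensive.

Import Order.TTheory GRing.Theory Num.Theory.
Local Open Scope fset_scope.

Section Paths.
Variable I : choiceType.

Definition term := ({fset I} * {fset I} * {fset I})%type.

Definition U (t : term) : {fset I} := t.1.1 `|` t.1.2 `|` t.2.

Definition tdel (t : term) (q : I) : term := ((t.1.1 `\ q, t.1.2 `\ q), t.2 `\ q).

Definition contraction_path (L : seq term) : bool := all (fun t => U t != fset0) L.

(* a loop order: one sequence of indices per term *)
Definition order := seq (seq I).

Fixpoint is_loop_order (L : seq term) (A : order) : Prop :=
  match L, A with
  | [::], [::] => True
  | t :: L', a :: A' =>
      (uniq a /\ forall x, (x \in a) = (x \in U t)) /\ is_loop_order L' A'
  | _, _ => False
  end.

Definition lroot (A : order) : option I :=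
  if A is a :: _ then ohead a else None.

(* largest k with q in U(L_i) for all i <= k *)
Definition kmax (q : I) (L : seq term) : nat := find (fun t => q \notin U t) L.

Definition Xpath (q : I) (s : nat) (L : seq term) : seq term :=
  [seq tdel t q | t <- take s L & U (tdel t q) != fset0].

Fixpoint build_prefix (q : I) (Ls : seq term) (AX : order) : order :=
  match Ls with
  | [::] => [::]
  | t :: Ls' =>
      if U (tdel t q) != fset0
      then (q :: head [::] AX) :: build_prefix q Ls' (behead AX)
      else [:: q] :: build_prefix q Ls' AX
  end.

Definition adjustY (q : I) (Y : seq term) (AYb : order) (BYb : option order)
  : option order :=
  if (~~ nilp Y) && (lroot AYb == Some q) then BYb else Some AYb.

Section Cost.
Variable R : realType.
Variable op : R -> R -> R.
Variable phi : seq term -> I -> R -> R.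

(* Tree-separable cost, defined by peeling; the fuel argument only ensures
   termination (fuel (size A + total length of A) + 1 is always sufficient). *)
Fixpoint fcost_fuel (n : nat) (L : seq term) (A : order) : R :=
  match n with
  | 0 => 0
  | n'.+1 =>
    match A with
    | (q :: _) :: _ =>
        let r := find (fun a => ohead a != Some q) A in
        let L1 := [seq tdel t q | t <- take r L & U (tdel t q) != fset0] in
        let A1 := [seq behead a | a <- take r A & 1 < size a] in
        op (phi (take r L) q (fcost_fuel n' L1 A1))
           (fcost_fuel n' (drop r L) (drop r A))
    | _ => 0
    end
  end.

Definition fcost (L : seq term) (A : order) : R :=
  fcost_fuel (size A + sumn (map size A)).+1 L A.

(* extended values R_{>=0} ∪ {+oo}, None = +oo *)
Definition ext_le (x y : option R) : bool :=
  match x, y with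
  | _, None => true
  | None, Some _ => false
  | Some a, Some b => (a <= b)%R
  end.

(* The (nondeterministic, w.r.t. tie-breaking) procedure ORDER, as the
   relation "ORDER L A B" = "ORDER(L) may return (A, B)", B = None meaning ⊥.
   cand q s / dl q s are the candidate C_{q,s} (None if A^Y = ⊥) and its value
   delta_{q,s} (None = +oo), computed from results of the recursive calls;
   sel q is the chosen s for C_q, qs = q*. *)
Inductive ORDER : seq term -> order -> option order -> Prop :=
| ORDER_nil : ORDER [::] [::] None
| ORDER_cons (t : term) (L' : seq term)
    (cand : I -> nat -> option order) (dl : I -> nat -> option R)
    (sel : I -> nat) (qs : I) (A : order) (B : option order) :
    (forall q s, q \in U t -> 0 < s <= kmax q (t :: L') ->
       exists AX BX AYb BYb,
         [/\ ORDER (Xpath q s (t :: L')) AX BX,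
             ORDER (drop s (t :: L')) AYb BYb,
             cand q s = omap (fun AY => build_prefix q (take s (t :: L')) AX ++ AY)
                          (adjustY q (drop s (t :: L')) AYb BYb)
           & dl q s = omap (fun AY =>
                         op (phi (take s (t :: L')) q
                                 (fcost (Xpath q s (t :: L')) AX))
                            (fcost (drop s (t :: L')) AY))
                          (adjustY q (drop s (t :: L')) AYb BYb)]) ->
    (forall q, q \in U t ->
       0 < sel q <= kmax q (t :: L') /\
       forall s, 0 < s <= kmax q (t :: L') -> ext_le (dl q (sel q)) (dl q s)) ->
    qs \in U t ->
    (forall q, q \in U t -> ext_le (dl qs (sel qs)) (dl q (sel q))) ->
    cand qs (sel qs) = Some A ->
    ((U t = [fset qs] /\ B = None) \/
     exists q', [/\ q' \in U t, q' != qs,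
                  (forall q, q \in U t -> q != qs ->
                     ext_le (dl q' (sel q')) (dl q (sel q)))
                & B = cand q' (sel q')]) ->
    ORDER (t :: L') A B.

End Cost.
End Paths.

(* Main.v *)
Require Import Defs.
From HB Require Import structures.
From mathcomp Require Import all_boot all_order all_algebra.
From mathcomp Require Import finmap.
From mathcomp Require Import reals.
From mathcomp Require boolp.
From mathcomp Require Import zify.
Import Order.TTheory GRing.Theory Num.Theory.

Set Implicit Arguments.
Unset Strict Implicit.
Unset Printing Implicit Defensive.

Section Proof.
Variable R : realType.
Variable I : choiceType.
Variable op : R -> R -> R.
Variable phi : seq (term I) -> I -> R -> R.
Variable op_ge0 : forall x y : R, (0 <= x)%R -> (0 <= y)%R -> (0 <= op x y)%R.
Variable op_monol : forall x x' y : R, (0 <= x)%R -> (x <= x')%R -> (0 <= y)%R ->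
             (op x y <= op x' y)%R.
Variable op_monor : forall x y y' : R, (0 <= x)%R -> (0 <= y)%R -> (y <= y')%R ->
             (op x y <= op x y')%R.
Variable phi_ge0 : forall P q (x : R), (0 <= x)%R -> (0 <= phi P q x)%R.
Variable phi_mono : forall P q (x y : R), (0 <= x)%R -> (x <= y)%R ->
                  (phi P q x <= phi P q y)%R.

Implicit Types (L Ls Y : seq (term I)) (A As AX AY B : Defs.order I) (t : term I) (q : I).

Local Notation ff := (fcost_fuel op phi).
Local Notation fc := (fcost op phi).
Local Notation ORD := (ORDER op phi).

Definition mu (A : Defs.order I) := size A + sumn (map size A).
Definition rr (q : I) (A : Defs.order I) := find (fun a => ohead a != Some q) A.
Definition peelA (r : nat) (A : Defs.order I) := [seq behead a | a <- take r A & 1 < size a].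

Lemma ff_S n L q a A' :
  ff n.+1 L ((q :: a) :: A') =
  op (phi (take (rr q ((q :: a) :: A')) L) q
         (ff n (Xpath q (rr q ((q :: a) :: A')) L) (peelA (rr q ((q :: a) :: A')) ((q :: a) :: A'))))
     (ff n (drop (rr q ((q :: a) :: A')) L) (drop (rr q ((q :: a) :: A')) ((q :: a) :: A'))).
Proof. by []. Qed.

Lemma mu_peel (B : Defs.order I) :
  mu [seq behead a | a <- B & 1 < size a] <= sumn (map size B).
Proof.
elim: B => [|b B IH] //=; rewrite /mu /= in IH *.
case: ifP => h /=; last by lia.
rewrite size_behead; lia.
Qed.

Lemma sumn_take (r : nat) (A : Defs.order I) : sumn (map size (take r A)) <= sumn (map size A).
Proof.
by rewrite -{2}(cat_take_drop r A) map_cat sumn_cat leq_addr.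
Qed.

Lemma mu_drop (r : nat) (A : Defs.order I) : mu (drop r A) <= mu A.
Proof.
have := congr1 (fun s => sumn (map size s)) (cat_take_drop r A).
rewrite map_cat sumn_cat /= => e.
rewrite /mu size_drop; have := leq_subr r (size A); lia.
Qed.

Lemma rr_cons q a A' : rr q ((q :: a) :: A') = (rr q A').+1.
Proof. by rewrite /rr /= eqxx. Qed.

Lemma mu_bounds q a A' (A := (q :: a) :: A') :
  mu (peelA (rr q A) A) < mu A /\ mu (drop (rr q A) A) < mu A.
Proof.
split.
  apply: (leq_ltn_trans (mu_peel _)); apply: (leq_ltn_trans (sumn_take _ _)).
  by rewrite /mu /A /=; lia.
rewrite /A rr_cons /=.
apply: (leq_ltn_trans (mu_drop _ _)); rewrite /mu /=; lia.
Qed.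

Lemma fuel_step n L A : mu A < n -> ff n.+1 L A = ff n L A.
Proof.
elim: n L A => [|n IH] L A //.
case: A => [|[|q a] A'] // h.
rewrite ff_S [RHS]ff_S.
have [h1 h2] := mu_bounds q a A'.
by rewrite !IH //; [apply: leq_trans h2 _ | apply: leq_trans h1 _]; rewrite -ltnS.
Qed.

Lemma fuel_ge n L A : mu A < n -> forall m, n <= m -> ff m L A = ff n L A.
Proof.
move=> h; elim=> [|m IH]; first by rewrite leqn0 => /eqP ->.
rewrite leq_eqVlt => /orP[/eqP -> //|hm].
rewrite fuel_step ?IH //; lia.
Qed.

Lemma fuelE n L A : mu A < n -> ff n L A = fc L A.
Proof.
move=> h; rewrite /fcost.
have h2 : mu A < (size A + sumn (map size A)).+1 by [].
case: (leqP n (size A + sumn (map size A)).+1) => hn.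
  by rewrite (fuel_ge L h hn).
by rewrite (fuel_ge L h2 (ltnW hn)).
Qed.

Lemma fcost_cons L q a A' (A := (q :: a) :: A') :
  fc L A = op (phi (take (rr q A) L) q (fc (Xpath q (rr q A) L) (peelA (rr q A) A)))
              (fc (drop (rr q A) L) (drop (rr q A) A)).
Proof.
have [h1 h2] := mu_bounds q a A'.
rewrite /fcost /A ff_S -/A.
by rewrite !fuelE.
Qed.

Lemma ff_ge0 n L A : (0 <= ff n L A)%R.
Proof.
elim: n L A => [|n IH] L A /=; first by [].
case: A => [|[|q a] A'] //; apply: op_ge0 => //; exact: phi_ge0.
Qed.

Lemma fc_ge0 L A : (0 <= fc L A)%R.
Proof. exact: ff_ge0. Qed.

Lemma opphi_mono P q a a' b b' : (0 <= a)%R -> (a <= a')%R -> (0 <= b)%R -> (b <= b')%R ->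
  (op (phi P q a) b <= op (phi P q a') b')%R.
Proof.
move=> ha haa hb hbb.
apply: le_trans (op_monol (phi_ge0 P q ha) (phi_mono P q ha haa) hb) _.
apply: op_monor => //; apply: phi_ge0; exact: le_trans haa.
Qed.


Local Open Scope fset_scope.

Definition lo_seq (t : term I) (a : seq I) := uniq a /\ forall x, (x \in a) = (x \in U t).

Lemma lo_cons t L a A : is_loop_order (t :: L) (a :: A) <-> lo_seq t a /\ is_loop_order L A.
Proof. by []. Qed.

Lemma U_tdel (t : term I) q : U (tdel t q) = U t `\ q.
Proof.
apply/fsetP=> x; rewrite /U /tdel !inE.
by case: (x == q); case: (x \in t.1.1); case: (x \in t.1.2).
Qed.

Lemma lo_size L A : is_loop_order L A -> size A = size L.
Proof.
elim: L A => [|t L IH] [|a A] //= [_ h]; by rewrite IH.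
Qed.

Lemma lo_take r L A : is_loop_order L A -> is_loop_order (take r L) (take r A).
Proof.
elim: L A r => [|t L IH] [|a A] [|r] //= [h1 h2]; split => //; exact: IH.
Qed.

Lemma lo_drop r L A : is_loop_order L A -> is_loop_order (drop r L) (drop r A).
Proof.
elim: L A r => [|t L IH] [|a A] [|r] //=.
by case=> _ h; exact: IH.
Qed.

Lemma lo_cat L1 A1 L2 A2 : is_loop_order L1 A1 -> is_loop_order L2 A2 ->
  is_loop_order (L1 ++ L2) (A1 ++ A2).
Proof.
elim: L1 A1 => [|t L IH] [|a A] //= [h1 h2] h; split => //; exact: IH.
Qed.

Lemma lo_seq_nil t a : lo_seq t a -> (U t == fset0) = (a == [::]).
Proof.
case=> _ h; case: a h => [|x a] h.
  by rewrite eqxx; apply/eqP/fsetP => y; rewrite -h inE.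
apply/negbTE/fset0Pn; exists x; by rewrite -h inE eqxx.
Qed.

Lemma lo_head t L A : U t != fset0 -> is_loop_order (t :: L) A ->
  exists q a A', A = (q :: a) :: A' /\ q \in U t.
Proof.
case: A => [|[|q a] A'] //= ht [hs _].
  by move: (@lo_seq_nil t [::] hs); rewrite eqxx (negbTE ht).
exists q, a, A'; split => //; case: hs => _ <-; by rewrite inE eqxx.
Qed.

Lemma cp_cons t L : contraction_path (t :: L) = (U t != fset0) && contraction_path L.
Proof. by []. Qed.

Lemma cp_drop r L : contraction_path L -> contraction_path (drop r L).
Proof.
elim: L r => [|t L IH] [|r] //.
rewrite cp_cons /= => /andP[_ h]; exact: IH.
Qed.

Lemma cp_Xpath q s L : contraction_path (Xpath q s L).
Proof.
rewrite /contraction_path /Xpath all_map; apply/allP => t.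
by rewrite mem_filter => /andP[].
Qed.

Lemma find_le_kmax q L A : is_loop_order L A -> rr q A <= kmax q L.
Proof.
rewrite /rr /kmax.
elim: L A => [|t L IH] [|a A] //= [[hu hm] h].
case: ifP => // /negbFE /eqP ha.
have : q \in U t by rewrite -hm; case: a ha {hu hm} => //= x a [->]; rewrite inE eqxx.
by move=> ->; rewrite /= ltnS IH.
Qed.

Lemma all_take_find q (A : Defs.order I) :
  all (fun a => ohead a == Some q) (take (rr q A) A).
Proof.
rewrite /rr; elim: A => [|a A IH] //=.
by case: ifP => //= /negbFE ->.
Qed.

Lemma drop_find_head (T : Type) (p : pred T) s x s' :
  drop (find p s) s = x :: s' -> p x.
Proof.
elim: s => [|y s IH] //=; case: ifP => [hy [<- _] //|_]; exact: IH.
Qed.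

Lemma lo_peel q Ls As : is_loop_order Ls As -> all (fun a => ohead a == Some q) As ->
  is_loop_order [seq tdel t q | t <- Ls & U (tdel t q) != fset0]
                [seq behead a | a <- As & 1 < size a].
Proof.
elim: Ls As => [|t Ls IH] [|a As] //= [[hu hm] h] /andP[ha hall].
case: a ha hu hm => //= x a /eqP[->] hu hm.
move: hu => /andP[hq hu].
have hs : lo_seq (tdel t q) a.
  split => // y; rewrite U_tdel in_fsetD1 -hm inE.
  by case: (eqVneq y q) => [->|] //=; rewrite (negbTE hq).
have := lo_seq_nil hs; case: a {hu hm hq} hs => [|y a] hs /= -> /=; first exact: IH.
by split; [exact: hs| exact: IH].
Qed.

Lemma lo_root_in t L A q : is_loop_order (t :: L) A -> lroot A = Some q -> q \in U t.
Proof.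
case: A => [|[|x a] A] //= [[_ hm] _] [<-]; by rewrite -hm inE eqxx.
Qed.

Lemma decompose t L A : contraction_path (t :: L) -> is_loop_order (t :: L) A ->
  exists q, exists a, exists A', [/\ A = (q :: a) :: A', q \in U t,
    0 < rr q A <= kmax q (t :: L),
    is_loop_order (Xpath q (rr q A) (t :: L)) (peelA (rr q A) A) &
    is_loop_order (drop (rr q A) (t :: L)) (drop (rr q A) A) /\
    (drop (rr q A) (t :: L) = [::] \/ lroot (drop (rr q A) A) != Some q)].
Proof.
rewrite cp_cons => /andP[ht hL] hA.
have [q [a [A' [eA hq]]]] := lo_head ht hA.
exists q, a, A'; split => //.
- by rewrite find_le_kmax // andbT eA rr_cons.
- apply: lo_peel; first exact: lo_take. exact: all_take_find.
split; first exact: lo_drop.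
case e: (drop (rr q A) A) => [|b B]; last first.
  by right; rewrite /= (drop_find_head e).
by left; apply/eqP; rewrite -size_eq0 -(lo_size (lo_drop _ hA)) e.
Qed.


Lemma size_build q Ls AX : size (build_prefix q Ls AX) = size Ls.
Proof. elim: Ls AX => [|t Ls IH] AX //=; case: ifP => _ /=; by rewrite IH. Qed.

Lemma build_heads q Ls AX : all (fun a => ohead a == Some q) (build_prefix q Ls AX).
Proof. elim: Ls AX => [|t Ls IH] AX //=; case: ifP => _ /=; by rewrite eqxx IH. Qed.

Lemma find_build q Ls AX AY : (AY = [::] \/ lroot AY != Some q) ->
  rr q (build_prefix q Ls AX ++ AY) = size Ls.
Proof.
move=> hY; rewrite /rr.
elim: Ls AX => [|t Ls IH] AX /=.
  by case: hY => [->|]; case: AY => [|b AY] //= ->.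
by case: ifP => _ /=; rewrite eqxx /= IH.
Qed.

Lemma peel_build q Ls AX :
  is_loop_order [seq tdel t q | t <- Ls & U (tdel t q) != fset0] AX ->
  [seq behead a | a <- build_prefix q Ls AX & 1 < size a] = AX.
Proof.
elim: Ls AX => [|t Ls IH] AX /=; first by case: AX.
case: ifP => ht /=; last exact: IH.
case: AX => [|a AX] //= [hs h].
have := lo_seq_nil hs; rewrite (negbTE ht); case: a hs => [|x a] hs //= _.
by rewrite IH.
Qed.

Lemma lo_build q Ls AX : all (fun t => q \in U t) Ls ->
  is_loop_order [seq tdel t q | t <- Ls & U (tdel t q) != fset0] AX ->
  is_loop_order Ls (build_prefix q Ls AX).
Proof.
elim: Ls AX => [|t Ls IH] AX //= /andP[hq hall].
case: ifP => ht /=.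
  case: AX => [|a AX] //= [[hu hm] h]; split; last exact: IH.
  split.
    rewrite /= hu andbT; apply/negP; rewrite hm U_tdel in_fsetD1 eqxx; by [].
  move=> y; rewrite inE hm U_tdel in_fsetD1.
  by case: (eqVneq y q) => [->|] //=.
move=> h; split; last exact: IH.
split => // y; rewrite inE.
move/negbFE: ht; rewrite U_tdel => /eqP /fsetP /(_ y); rewrite in_fsetD1 inE.
by case: (eqVneq y q) => [->|] //= _ ->.
Qed.

Lemma all_take_kmax q s L : s <= kmax q L -> all (fun t => q \in U t) (take s L).
Proof.
rewrite /kmax; elim: L s => [|t L IH] [|s] //=.
by case: ifP => //= /negbFE -> /IH.
Qed.

Lemma construct L q s AX AY : 0 < s <= kmax q L ->
  is_loop_order (Xpath q s L) AX -> is_loop_order (drop s L) AY ->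
  (drop s L = [::] \/ lroot AY != Some q) ->
  [/\ is_loop_order L (build_prefix q (take s L) AX ++ AY),
      lroot (build_prefix q (take s L) AX ++ AY) = Some q &
      fc L (build_prefix q (take s L) AX ++ AY) =
      op (phi (take s L) q (fc (Xpath q s L) AX)) (fc (drop s L) AY)].
Proof.
move=> /andP[s0 hs] hX hY hYr.
have hk : s <= size L by apply: leq_trans hs (find_size _ _).
have hsz : size (build_prefix q (take s L) AX) = s by rewrite size_build size_takel.
have hYr' : AY = [::] \/ lroot AY != Some q.
  case: hYr => [e|]; [left | by right].
  by apply/eqP; rewrite -size_eq0 (lo_size hY) e.
have [a0 [B0 eC]] : exists a0 B0, build_prefix q (take s L) AX ++ AY = (q :: a0) :: B0.
  case e: (take s L) => [|t0 Ls0]; first by move: hsz; rewrite e => /= h; rewrite -h in s0.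
  by rewrite /=; case: ifP => _; eexists; eexists.
split.
- rewrite -{1}(cat_take_drop s L); apply: lo_cat => //.
  exact: lo_build (all_take_kmax hs) hX.
- by rewrite eC.
rewrite eC fcost_cons -eC (find_build _ _ hYr') size_takel //.
rewrite /peelA (take_size_cat _ hsz) (peel_build hX) (drop_size_cat _ hsz).
by [].
Qed.


Lemma ext_le_refl (x : option R) : ext_le x x.
Proof. by case: x => //= a; exact: lexx. Qed.

Lemma ext_le_trans (x y z : option R) : ext_le x y -> ext_le y z -> ext_le x z.
Proof. case: x; case: y; case: z => //= a b c; exact: le_trans. Qed.

Lemma ext_le_total (x y : option R) : ext_le x y || ext_le y x.
Proof. case: x; case: y => //= a b; exact: le_total. Qed.

Lemma ext_le_Some (x : option R) b : ext_le x (Some b) -> exists2 a, x = Some a & (a <= b)%R.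
Proof. by case: x => // a h; exists a. Qed.

Lemma seq_min (T : eqType) (g : T -> option R) (s : seq T) : s != [::] ->
  exists2 x, x \in s & forall y, y \in s -> ext_le (g x) (g y).
Proof.
elim: s => [|x s IH] // _.
case: (eqVneq s [::]) => [->|hs].
  by exists x; rewrite ?inE // => y; rewrite inE => /eqP ->; exact: ext_le_refl.
have [m hm hmin] := IH hs.
case: (boolP (ext_le (g x) (g m))) => h.
  exists x; first by rewrite inE eqxx.
  move=> y; rewrite inE => /orP[/eqP ->|hy]; first exact: ext_le_refl.
  exact: ext_le_trans h (hmin _ hy).
exists m; first by rewrite inE hm orbT.
have h' : ext_le (g m) (g x) by move: (ext_le_total (g x) (g m)); rewrite (negbTE h).
move=> y; rewrite inE => /orP[/eqP ->|hy] //; exact: hmin.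
Qed.

Lemma fset_min (S : {fset I}) (g : I -> option R) : S != fset0 ->
  exists2 x, x \in S & forall y, y \in S -> ext_le (g x) (g y).
Proof.
move=> /fset0Pn [z hz].
have hz' : z \in enum_fset S := hz.
have hne : enum_fset S != [::] by move: hz'; case: (enum_fset S).
have [x hx hmin] := seq_min g hne.
by exists x.
Qed.

Definition Good L A (B : option (Defs.order I)) :=
  [/\ is_loop_order L A,
      (forall A', is_loop_order L A' -> (fc L A <= fc L A')%R)
    & match B with
      | Some B0 =>
          [/\ is_loop_order L B0, lroot B0 != lroot A &
              forall B', is_loop_order L B' -> lroot B' != lroot A ->
                (fc L B0 <= fc L B')%R]
      | None => forall B', is_loop_order L B' -> lroot B' = lroot A
      end].

Lemma adjY_ok Y q AYb BYb AY : Good Y AYb BYb -> adjustY q Y AYb BYb = Some AY ->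
  is_loop_order Y AY /\ (Y = [::] \/ lroot AY != Some q).
Proof.
case=> hlo hopt hB; rewrite /adjustY; case: ifP => [/andP[hn /eqP hr] | hc].
  move=> eB; rewrite eB in hB; case: hB => h1 h2 _; split => //; right; by rewrite -hr.
case=> <-; split => //; case: Y hc {hlo hopt hB} => [|y Y] /=; first by left.
by move=> ->; right.
Qed.

Lemma adjY_opt Y q AYb BYb A' : Good Y AYb BYb -> is_loop_order Y A' ->
  (Y = [::] \/ lroot A' != Some q) ->
  exists AY, adjustY q Y AYb BYb = Some AY /\ (fc Y AY <= fc Y A')%R.
Proof.
case=> hlo hopt hB hA' hr; rewrite /adjustY; case: ifP => [/andP[hn /eqP e] | hc].
  have hr' : lroot A' != lroot AYb.
    rewrite e; case: hr => // eY; by rewrite eY in hn.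
  case: BYb hB => [B0 [h1 h2 h3]|hB]; first by exists B0; split => //; exact: h3.
  by rewrite (hB _ hA') eqxx in hr'.
by exists AYb; split => //; exact: hopt.
Qed.

Lemma kmax_adj L q AYb BYb : contraction_path L ->
  is_loop_order (drop (kmax q L) L) AYb ->
  exists AY, adjustY q (drop (kmax q L) L) AYb BYb = Some AY.
Proof.
move=> hL; rewrite /adjustY; case e: (drop (kmax q L) L) => [|y Y] hA; first by eexists.
have hy : q \notin U y by have := drop_find_head e.
have := cp_drop (kmax q L) hL; rewrite e cp_cons => /andP[hy0 _].
have [q0 [a [A' [eA hq0]]]] := lo_head hy0 hA.
rewrite eA /=; case: (eqVneq q0 q) => [eq|ne]; first by rewrite -eq hq0 in hy.
have -> : (Some q0 == Some q) = false by apply/eqP; case; apply/eqP.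
by eexists.
Qed.


Definition muL L := (size L + sumn [seq #|` U t| | t <- L])%N.

Lemma muL_cat L1 L2 : muL (L1 ++ L2) = (muL L1 + muL L2)%N.
Proof. rewrite /muL size_cat map_cat sumn_cat; lia. Qed.

Lemma muL_peel q Ls : all (fun t => q \in U t) Ls ->
  (muL [seq tdel t q | t <- Ls & U (tdel t q) != fset0] + size Ls <= muL Ls)%N.
Proof.
rewrite /muL; elim: Ls => [|t Ls IH] //= /andP[hq hall].
have := IH hall; have := cardfsD1 q (U t); rewrite hq U_tdel.
case: ifP => _ /=; rewrite ?U_tdel; lia.
Qed.

Lemma muL_X q s L : 0 < s <= kmax q L -> muL (Xpath q s L) < muL L.
Proof.
move=> /andP[s0 hs].
have hk : s <= size L by apply: leq_trans hs (find_size _ _).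
have := muL_peel (all_take_kmax hs); rewrite size_takel //.
have := muL_cat (take s L) (drop s L); rewrite cat_take_drop /Xpath; lia.
Qed.

Lemma muL_drop s t L : 0 < s -> muL (drop s (t :: L)) < muL (t :: L).
Proof.
case: s => [|s] // _ /=.
have := muL_cat (take s L) (drop s L); rewrite cat_take_drop /muL /=; lia.
Qed.

Theorem correct n : forall L, muL L < n -> contraction_path L ->
  forall A Bo, ORD L A Bo -> Good L A Bo.
Proof.
elim: n => [|n IHn] L hn hL A Bo HO //.
case: L hn hL HO => [|t L'] hn hL HO.
  inversion HO; subst; split => //.
    by move=> A'; case: A' => // _; exact: lexx.
  by move=> B'; case: B'.
inversion HO as [|t0 L0 cand dl sel qs A0 Bo0 Hc Hs Hq Hm HA HB]; subst.
have ht : U t != fset0 by move: hL; rewrite cp_cons => /andP[].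
have GX : forall q s AX BX, 0 < s <= kmax q (t :: L') ->
    ORD (Xpath q s (t :: L')) AX BX -> Good (Xpath q s (t :: L')) AX BX.
  move=> q s AX BX hs HX; apply: (IHn _ _ (cp_Xpath _ _ _) _ _ HX).
  exact: leq_trans (muL_X hs) hn.
have GY : forall s AY BY, 0 < s ->
    ORD (drop s (t :: L')) AY BY -> Good (drop s (t :: L')) AY BY.
  move=> s AY BY hs HY; apply: (IHn _ _ (cp_drop _ hL) _ _ HY).
  exact: leq_trans (muL_drop _ _ hs) hn.
have Hcand_ok : forall q s C, q \in U t -> 0 < s <= kmax q (t :: L') ->
    cand q s = Some C ->
    [/\ is_loop_order (t :: L') C, lroot C = Some q & dl q s = Some (fc (t :: L') C)].
  move=> q s C hq hs eC.
  have [AX [BX [AYb [BYb [HX HY Hcq Hdq]]]]] := Hc q s hq hs.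
  have [hXlo _ _] := GX _ _ _ _ hs HX.
  have GYs := GY _ _ _ (andP hs).1 HY.
  move: Hcq Hdq; rewrite eC; case E: (adjustY _ _ _ _) => [AY|] //= [->] ->.
  have [hAY hr] := adjY_ok GYs E.
  have [h1 h2 h3] := construct hs hXlo hAY hr.
  by split => //; rewrite h3.
have Hlow : forall A', is_loop_order (t :: L') A' -> exists q s v,
    [/\ lroot A' = Some q, q \in U t, 0 < s <= kmax q (t :: L'), dl q s = Some v &
        (v <= fc (t :: L') A')%R].
  move=> A' hA'.
  have [q [a [A'' [eA hq hr hXlo [hYlo hYr]]]]] := decompose hL hA'.
  have [AX [BX [AYb [BYb [HX HY Hcq Hdq]]]]] := Hc q _ hq hr.
  have [_ optX _] := GX _ _ _ _ hr HX.
  have GYs := GY _ _ _ (andP hr).1 HY.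
  have [AY [E le]] := adjY_opt GYs hYlo hYr.
  exists q, (rr q A'), (op (phi (take (rr q A') (t :: L')) q
      (fc (Xpath q (rr q A') (t :: L')) AX)) (fc (drop (rr q A') (t :: L')) AY)).
  split => //; first by rewrite eA.
    by rewrite Hdq E.
  rewrite eA fcost_cons -eA; apply: opphi_mono; rewrite ?fc_ge0 //; exact: optX.
have Hdsome : forall q s, q \in U t -> 0 < s <= kmax q (t :: L') ->
    (exists v, dl q s = Some v) -> exists C, cand q s = Some C.
  move=> q s hq hs [v hv].
  have [AX [BX [AYb [BYb [HX HY Hcq Hdq]]]]] := Hc q s hq hs.
  move: hv; rewrite Hcq Hdq; case: (adjustY _ _ _ _) => //= AY _; by eexists.
have Hkm : forall q, q \in U t -> exists v, dl q (kmax q (t :: L')) = Some v.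
  move=> q hq.
  have hk : 0 < kmax q (t :: L') <= kmax q (t :: L') by rewrite leqnn andbT /kmax /= hq.
  have [AX [BX [AYb [BYb [HX HY Hcq Hdq]]]]] := Hc q _ hq hk.
  have [hYlo _ _] := GY _ _ _ (andP hk).1 HY.
  have [AY E] := kmax_adj BYb hL hYlo.
  by rewrite Hdq E; eexists.
have Hselv : forall q, q \in U t -> exists v, dl q (sel q) = Some v.
  move=> q hq; have [_ hmin] := Hs q hq.
  have [v hv] := Hkm q hq.
  have hk : 0 < kmax q (t :: L') <= kmax q (t :: L') by rewrite leqnn andbT /kmax /= hq.
  have := hmin _ hk; rewrite hv => /ext_le_Some [w -> _]; by exists w.
have [hsr hsmin] := Hs qs Hq.
have [hAlo hAr hAd] := Hcand_ok qs (sel qs) A Hq hsr HA.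
split => //.
  move=> A' hA'.
  have [q [s [v [er hq hsq hdv hv]]]] := Hlow A' hA'.
  have [hqr hqmin] := Hs q hq.
  have := hqmin s hsq; rewrite hdv => /ext_le_Some [w hw hwv].
  have := Hm q hq; rewrite hAd hw /= => hAw.
  exact: le_trans hAw (le_trans hwv hv).
case: HB => [[hU ->]| [q' [hq' hne hmin' ->]]].
  move=> B' hB'.
  have [q0 [a [B'' [eB hq0]]]] := lo_head ht hB'.
  by rewrite eB hAr; move: hq0; rewrite hU inE => /eqP ->.
have [sr' _] := Hs q' hq'.
have [C eC] := Hdsome q' (sel q') hq' sr' (Hselv q' hq').
rewrite eC.
have [hClo hCr hCd] := Hcand_ok _ _ _ hq' sr' eC.
split => //.
  rewrite hCr hAr; apply/eqP; case; exact/eqP.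
move=> B' hB' hBr.
have [q [s [v [er hq hsq hdv hv]]]] := Hlow B' hB'.
have hqne : q != qs by apply: contraNneq hBr => e; rewrite er hAr e.
have [hqr hqmin] := Hs q hq.
have := hqmin s hsq; rewrite hdv => /ext_le_Some [w hw hwv].
have := hmin' q hq hqne; rewrite hCd hw /= => hCw.
exact: le_trans hCw (le_trans hwv hv).
Qed.


Theorem exists_order n : forall L, muL L < n -> contraction_path L ->
  exists A Bo, ORD L A Bo.
Proof.
elim: n => [|n IHn] L hn hL //.
case: L hn hL => [|t L'] hn hL; first by exists [::], None; constructor.
have ht : U t != fset0 by move: hL; rewrite cp_cons => /andP[].
pose L := t :: L'.
have H1 : forall q s, exists w : (Defs.order I * option (Defs.order I) * Defs.order I *
                                 option (Defs.order I)),
    (q \in U t) && (0 < s <= kmax q L) ->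
    ORD (Xpath q s L) w.1.1.1 w.1.1.2 /\ ORD (drop s L) w.1.2 w.2.
  move=> q s; case: (boolP ((q \in U t) && (0 < s <= kmax q L))) => h;
    last by exists ([::], None, [::], None).
  move/andP: h => [hq hs].
  have [AX [BX HX]] := IHn (Xpath q s L) (leq_trans (muL_X hs) hn) (cp_Xpath _ _ _).
  have [AY [BY HY]] := IHn (drop s L) (leq_trans (muL_drop _ _ (andP hs).1) hn)
                          (cp_drop _ hL).
  by exists (AX, BX, AY, BY).
pose W := fun q => projT1 (boolp.choice (H1 q)).
have HW : forall q s, (q \in U t) && (0 < s <= kmax q L) ->
    ORD (Xpath q s L) (W q s).1.1.1 (W q s).1.1.2 /\ ORD (drop s L) (W q s).1.2 (W q s).2.
  move=> q s; exact: (projT2 (boolp.choice (H1 q)) s).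
pose cand := fun q s => omap (fun AY => build_prefix q (take s L) (W q s).1.1.1 ++ AY)
                          (adjustY q (drop s L) (W q s).1.2 (W q s).2).
pose dl := fun q s => omap (fun AY => op (phi (take s L) q (fc (Xpath q s L) (W q s).1.1.1))
                                        (fc (drop s L) AY))
                          (adjustY q (drop s L) (W q s).1.2 (W q s).2).
have Hc : forall q s, q \in U t -> 0 < s <= kmax q L ->
   exists AX BX AYb BYb,
         [/\ ORD (Xpath q s L) AX BX,
             ORD (drop s L) AYb BYb,
             cand q s = omap (fun AY => build_prefix q (take s L) AX ++ AY)
                          (adjustY q (drop s L) AYb BYb)
           & dl q s = omap (fun AY =>
                         op (phi (take s L) q (fc (Xpath q s L) AX))
                            (fc (drop s L) AY))
                          (adjustY q (drop s L) AYb BYb)].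
  move=> q s hq hs; have [h1 h2] := HW q s (introT andP (conj hq hs)).
  by exists (W q s).1.1.1, (W q s).1.1.2, (W q s).1.2, (W q s).2.
have Hkm : forall q, q \in U t -> exists v, dl q (kmax q L) = Some v.
  move=> q hq.
  have hk : 0 < kmax q L <= kmax q L by rewrite leqnn andbT /L /kmax /= hq.
  have [_ HY] := HW q _ (introT andP (conj hq hk)).
  have hlt : muL (drop (kmax q L) L) < muL L by apply: muL_drop; exact: (andP hk).1.
  have [hYlo _ _] := correct (leqnn _) (cp_drop _ hL) HY.
  have [AY E] := kmax_adj (W q (kmax q L)).2 hL hYlo.
  by rewrite /dl E; eexists.
have H2 : forall q, exists s, q \in U t -> 0 < s <= kmax q L /\
    forall s', 0 < s' <= kmax q L -> ext_le (dl q s) (dl q s').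
  move=> q; case: (boolP (q \in U t)) => hq; last by exists 0.
  have hk : 0 < kmax q L by rewrite /L /kmax /= hq.
  have hne : iota 1 (kmax q L) != [::] by rewrite -size_eq0 size_iota -lt0n.
  have [s hs hmin] := seq_min (dl q) hne.
  exists s => _; split; first by move: hs; rewrite mem_iota add1n ltnS.
  by move=> s' hs'; apply: hmin; rewrite mem_iota add1n ltnS.
pose sel := projT1 (boolp.choice H2).
have Hs : forall q, q \in U t -> 0 < sel q <= kmax q L /\
    forall s', 0 < s' <= kmax q L -> ext_le (dl q (sel q)) (dl q s').
  move=> q; exact: (projT2 (boolp.choice H2) q).
have Hselv : forall q, q \in U t -> exists v, dl q (sel q) = Some v.
  move=> q hq; have [_ hmin] := Hs q hq.
  have [v hv] := Hkm q hq.
  have hk : 0 < kmax q L <= kmax q L by rewrite leqnn andbT /L /kmax /= hq.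
  have := hmin _ hk; rewrite hv => /ext_le_Some [w -> _]; by exists w.
have [qs hqs hqmin] := fset_min (fun q => dl q (sel q)) ht.
have [A eA] : exists A, cand qs (sel qs) = Some A.
  have [v hv] := Hselv qs hqs.
  move: hv; rewrite /cand /dl; case: (adjustY _ _ _ _) => //= AY _; by eexists.
case: (eqVneq (U t `\ qs) fset0) => hD.
  exists A, None.
  apply: (ORDER_cons (cand := cand) (dl := dl) (sel := sel) (qs := qs)) => //.
  left; split => //; apply/fsetP => x; rewrite inE.
  move/fsetP: hD => /(_ x); rewrite in_fsetD1 inE.
  by case: (eqVneq x qs) => [->|] //= _ ->.
have [q' hq' hq'min] := fset_min (fun q => dl q (sel q)) hD.
exists A, (cand q' (sel q')).
apply: (ORDER_cons (cand := cand) (dl := dl) (sel := sel) (qs := qs)) => //.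
right; exists q'; move: hq'; rewrite in_fsetD1 => /andP[hne hq'].
split => // q hq hqne; apply: hq'min; by rewrite in_fsetD1 hqne.
Qed.

End Proof.

Local Open Scope ring_scope.

Theorem mainTheorem1 (R : realType) (I : choiceType)
    (op : R -> R -> R) (phi : seq (term I) -> I -> R -> R)
    (op_ge0 : forall x y : R, (0 <= x)%R -> (0 <= y)%R -> (0 <= op x y)%R)
    (opA : forall x y z : R, (0 <= x)%R -> (0 <= y)%R -> (0 <= z)%R ->
             op x (op y z) = op (op x y) z)
    (op_monol : forall x x' y : R, (0 <= x)%R -> (x <= x')%R -> (0 <= y)%R ->
             (op x y <= op x' y)%R)
    (op_monor : forall x y y' : R, (0 <= x)%R -> (0 <= y)%R -> (y <= y')%R ->
             (op x y <= op x y')%R)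
    (op0x : forall x : R, (0 <= x)%R -> op 0 x = x)
    (opx0 : forall x : R, (0 <= x)%R -> op x 0 = x)
    (phi_ge0 : forall P q (x : R), (0 <= x)%R -> (0 <= phi P q x)%R)
    (phi_mono : forall P q (x y : R), (0 <= x)%R -> (x <= y)%R ->
                  (phi P q x <= phi P q y)%R)
    (L : seq (term I)) (HL : contraction_path L) :
  (exists A B, ORDER op phi L A B) /\
  forall A B, ORDER op phi L A B ->
    [/\ is_loop_order L A,
        (forall A', is_loop_order L A' -> (fcost op phi L A <= fcost op phi L A')%R)
      & match B with
        | Some B0 =>
            [/\ is_loop_order L B0, lroot B0 != lroot A &
                forall B', is_loop_order L B' -> lroot B' != lroot A ->
                  (fcost op phi L B0 <= fcost op phi L B')%R]
        | None => forall B', is_loop_order L B' -> lroot B' = lroot A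
        end].
Proof.
split.
  exact: (exists_order op_ge0 op_monol op_monor phi_ge0 phi_mono (leqnn _) HL).
move=> A B HO.
exact: (correct op_ge0 op_monol op_monor phi_ge0 phi_mono (leqnn _) HL HO).
Qed.
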